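(* Consider a finite set of jobs $1,\dots,n$ to be processed on a single machine with preemption, where job $i$ has release time $r_i\ge 0$ and size (processing requirement) $p_i>0$. Let $S=[s_1,\dots,s_n]$ be an ordering of the jobs, and let $\omega$ be any schedule with completion sequence $S$. Then the schedule $\mathrm{Pri}_S$ dominates $\omega$, i.e. $C_{i,\mathrm{Pri}_S}\le C_{i,\omega}$ for every job $i$.
   Context: A schedule is a (measurable) function $\omega(i,t)\ge 0$ giving the fraction of the machine's unit-rate resource allocated to job $i$ at time $t$, with $\sum_i \omega(i,t)\le 1$ for all $t$, and $\omega(i,t)=0$ whenever job $i$ is not pending at time $t$. Job $i$ is pending at time $t$ if it has been released ($t\ge r_i$) and not yet completed. The completion time $C_{i,\omega}$ of job $i$ under $\omega$ is the earliest time $C$ such that $\int_{r_i}^{C}\omega(i,t)\,dt = p_i$. A schedule $\omega$ dominates a schedule $\omega'$ if $C_{i,\omega}\le C_{i,\omega'}$ for every job $i$. A completion sequence is an ordering $S=[s_1,\dots,s_n]$ of the jobs; a schedule $\omega$ has completion sequence $S$ if $C_{s_i,\omega}\le C_{s_j,\omega}$ for all $i<j$. For a completion sequence $S$, the schedule $\mathrm{Pri}_S$ is defined by $\mathrm{Pri}_S(i,t)=1$ if $i$ is the first job in $S$ that is pending at time $t$, and $\mathrm{Pri}_S(i,t)=0$ otherwise. *)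

(* Defs.v *)
From HB Require Import structures.
From mathcomp Require Import all_boot all_order all_algebra all_fingroup.
From mathcomp Require Import all_classical all_reals all_analysis.
Set Implicit Arguments. Unset Strict Implicit. Unset Printing Implicit Defensive.
Import Order.TTheory GRing.Theory Num.Theory.
Local Open Scope classical_set_scope.
Local Open Scope ring_scope.

Section Scheduling.
Variables (R : realType) (n : nat).
Variables (r p : 'I_n -> R).

Definition work (w : 'I_n -> R -> R) (i : 'I_n) (a b : R) : \bar R :=
  (\int[lebesgue_measure]_(t in `[a, b]) (w i t)%:E)%E.

Definition is_completion (w : 'I_n -> R -> R) (i : 'I_n) (C : R) : Prop :=
  work w i (r i) C = (p i)%:E /\
  (forall C', C' < C -> work w i (r i) C' <> (p i)%:E).

Definition pending (w : 'I_n -> R -> R) (i : 'I_n) (t : R) : Prop :=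
  r i <= t /\ (forall C, is_completion w i C -> t < C).

Definition is_schedule (w : 'I_n -> R -> R) : Prop :=
  (forall i, measurable_fun [set: R] (w i)) /\
  (forall i t, 0 <= w i t) /\
  (forall t, \sum_(i < n) w i t <= 1) /\
  (forall i t, ~ pending w i t -> w i t = 0).

(* the completion sequence S = [s_1,...,s_n] is given by a permutation s:
   s k is the (k+1)-th job of S *)
Definition has_completion_sequence (w : 'I_n -> R -> R) (s : {perm 'I_n})
  (C : 'I_n -> R) : Prop :=
  (forall i, is_completion w i (C i)) /\
  (forall k l : 'I_n, (k < l)%N -> C (s k) <= C (s l)).

Definition first_pending (w : 'I_n -> R -> R) (s : {perm 'I_n}) (i : 'I_n) (t : R) : Prop :=
  pending w i t /\ (forall j, pending w j t -> ((s^-1)%g i <= (s^-1)%g j)%N).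

(* w is the schedule Pri_S: Pri_S(i,t) = 1 if i is the first job of S pending
   at t (pending w.r.t. Pri_S itself), and 0 otherwise *)
Definition is_Pri (s : {perm 'I_n}) (w : 'I_n -> R -> R) : Prop :=
  forall i t, (first_pending w s i t -> w i t = 1) /\
              (~ first_pending w s i t -> w i t = 0).

End Scheduling.

(* Main.v *)
Require Import Defs.
From HB Require Import structures.
From mathcomp Require Import all_boot all_order all_algebra all_fingroup.
From mathcomp Require Import all_classical all_reals all_analysis.
From mathcomp Require Import measurable_realfun lra.
Import Order.TTheory GRing.Theory Num.Theory.
Local Open Scope classical_set_scope.
Local Open Scope ring_scope.

Section Aux.
Context (R : realType) (n : nat) (r p : 'I_n -> R).
Local Notation mu := (@lebesgue_measure R).

Lemma sched_ge0 x : is_schedule r p x -> forall j t, 0 <= x j t.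
Proof. by case=> _ [h _]. Qed.

Lemma sched_le1 x : is_schedule r p x -> forall j t, x j t <= 1.
Proof.
move=> hx j t; case: hx => _ [h0 [h1 _]].
apply: le_trans (h1 t); rewrite (bigD1 j) //= lerDl.
by apply: sumr_ge0 => i _; exact: h0.
Qed.

Lemma sched_mE x (D : set R) : is_schedule r p x -> forall j,
  measurable_fun D (fun t => (x j t)%:E).
Proof.
move=> [hm _] j; apply/measurable_EFinP.
exact: (measurable_funS measurableT (@subsetT _ D) (hm j)).
Qed.

Lemma zero_before x j t : is_schedule r p x -> t < r j -> x j t = 0.
Proof.
move=> [_ [_ [_ h]]] ht; apply: h => -[hr _]; lra.
Qed.

Lemma zero_after x j C t : is_schedule r p x -> is_completion r p x j C ->
  C <= t -> x j t = 0.
Proof.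
move=> [_ [_ [_ h]]] hC ht; apply: h => -[_ h2].
have := h2 _ hC; lra.
Qed.

Lemma int_eqD (f : R -> R) (D1 D2 : set R) :
  (forall t, D1 t -> ~ D2 t -> f t = 0) ->
  (forall t, D2 t -> ~ D1 t -> f t = 0) ->
  (\int[mu]_(t in D1) (f t)%:E = \int[mu]_(t in D2) (f t)%:E)%E.
Proof.
move=> h1 h2; rewrite [LHS]integral_mkcond [RHS]integral_mkcond.
apply: eq_integral => t _; rewrite /patch.
case: ifPn => /= [/set_mem t1|/negP t1]; case: ifPn => /= [/set_mem t2|/negP t2] //.
- by rewrite h1 //; move=> /mem_set.
- by rewrite h2 //; move=> /mem_set.
Qed.

Lemma int_le_mu (f : R -> R) (D : set R) : measurable D ->
  measurable_fun D (fun t => (f t)%:E) ->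
  (forall t, 0 <= f t <= 1) ->
  (\int[mu]_(t in D) (f t)%:E <= mu D)%E.
Proof.
move=> mD mf hf.
rewrite -[X in (_ <= X)%E]mul1e -integral_cst //.
apply: ge0_le_integral => //.
- by move=> t _; rewrite lee_fin; case/andP: (hf t).
- by move=> t _; rewrite lee_fin; case/andP: (hf t).
Qed.

Lemma mu_cc (a b : R) : a <= b -> mu `[a, b] = (b - a)%:E.
Proof.
move=> ab; rewrite lebesgue_measure_itv /=.
case: ifPn; rewrite lte_fin => h; first by rewrite EFinB.
move: h; rewrite -leNgt => h.
have -> : b = a by apply/eqP; rewrite eq_le h ab.
by rewrite subrr.
Qed.

Lemma mu_oc (a b : R) : a <= b -> mu `]a, b] = (b - a)%:E.
Proof.
move=> ab; rewrite lebesgue_measure_itv /=.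
case: ifPn; rewrite lte_fin => h; first by rewrite EFinB.
move: h; rewrite -leNgt => h.
have -> : b = a by apply/eqP; rewrite eq_le h ab.
by rewrite subrr.
Qed.


Lemma work_ge0 x j a b : is_schedule r p x -> (0 <= work x j a b)%E.
Proof.
move=> hx; apply: integral_ge0 => t _; rewrite lee_fin; exact: sched_ge0.
Qed.

Lemma work_le_mu x j a b : is_schedule r p x -> (work x j a b <= mu `[a, b])%E.
Proof.
move=> hx; apply: int_le_mu => //; first exact: sched_mE.
by move=> t; rewrite sched_ge0 // sched_le1.
Qed.

Lemma work_fin x j a b : is_schedule r p x ->
  work x j a b = (fine (work x j a b))%:E.
Proof.
move=> hx; rewrite fineK // ge0_fin_numE ?work_ge0 //.
apply: le_lt_trans (work_le_mu _ _ _ _ hx) _.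
rewrite lebesgue_measure_itv /=; case: ifPn => _ //.
by rewrite -EFinB ltry.
Qed.

Lemma work_split x j a c c' : is_schedule r p x -> c <= c' ->
  (work x j a c <= work x j a c' <= work x j a c + (c' - c)%:E)%E.
Proof.
move=> hx cc.
have sub : `[a, c] `<=` `[a, c'].
  move=> t /=; rewrite !in_itv /= => /andP[-> tc] /=; lra.
have E : work x j a c' = (work x j a c +
     \int[mu]_(t in `[a, c'] `\` `[a, c]) (x j t)%:E)%E.
  rewrite /work -ge0_integral_setU //; last 4 first.
  - by apply: measurableD.
  - exact: sched_mE.
  - by move=> t _; rewrite lee_fin; exact: sched_ge0.
  - by rewrite disj_set2E setDIK.
  by rewrite setDUK.
rewrite E; apply/andP; split.
  by rewrite leeDl // integral_ge0 // => t _; rewrite lee_fin; exact: sched_ge0.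
rewrite leeD2l //; apply: (@le_trans _ _ (mu (`[a, c'] `\` `[a, c]))).
  apply: int_le_mu.
  - exact: measurableD.
  - exact: sched_mE.
  - by move=> t; rewrite sched_ge0 // sched_le1.
rewrite -mu_oc //; apply: le_measure; rewrite ?inE //=.
- exact: measurableD.
move=> t /= [] ; rewrite !in_itv /= => /andP[ha tc'] /negP.
by rewrite ha /= -ltNge => ->.
Qed.


Definition wk (x : 'I_n -> R -> R) j a b := fine (work x j a b).

Lemma wk_split x j a c c' : is_schedule r p x -> c <= c' ->
  wk x j a c <= wk x j a c' <= wk x j a c + (c' - c).
Proof.
move=> hx cc; have := work_split x j a c c' hx cc.
by rewrite /wk (work_fin x j a c hx) (work_fin x j a c' hx) /= -EFinD !lee_fin.
Qed.

Lemma wk_empty x j a b : b < a -> wk x j a b = 0.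
Proof.
move=> ba; rewrite /wk /work set_itv_ge ?integral_set0 //.
by rewrite bnd_simp -ltNge.
Qed.

Lemma wk_pt x j a : wk x j a a = 0.
Proof. by rewrite /wk /work set_itv1 integral_set1. Qed.

Lemma exists_completion x j T : is_schedule r p x -> 0 < p j ->
  p j <= wk x j (r j) T -> exists C, is_completion r p x j C /\ C <= T.
Proof.
move=> hx hp hT.
pose F c := wk x j (r j) c.
pose E := [set c | p j <= F c].
have ET : E T by [].
have lbE : lbound E (r j).
  move=> c; rewrite /E /= => hc; rewrite leNgt; apply/negP => cr.
  by move: hc; rewrite /F wk_empty //; lra.
have hinf : has_inf E by split; [exists T | exists (r j)].
pose C := inf E.
have CT : C <= T by exact: (ge_inf hinf.2 ET).
have ge_C : forall c, E c -> C <= c by move=> c Ec; exact: (ge_inf hinf.2 Ec).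
have FC1 : p j <= F C.
  rewrite leNgt; apply/negP => hlt.
  have d0 : 0 < p j - F C by lra.
  have [c Ec cC] := inf_adherent d0 hinf.
  have := ge_C _ Ec => Cc.
  have := wk_split x j (r j) C c hx Cc; rewrite -/(F c) -/(F C) => /andP[_ h].
  move: Ec; rewrite /E /= => Ec; lra.
have FC2 : F C <= p j.
  rewrite leNgt; apply/negP => hlt.
  pose c := C - (F C - p j) / 2.
  have cC : c <= C by rewrite /c; lra.
  have nEc : ~ E c.
    move=> /ge_C; rewrite /c; lra.
  have := wk_split x j (r j) c C hx cC; rewrite -/(F c) -/(F C) => /andP[_ h].
  have : F c < p j by rewrite ltNge; apply/negP.
  rewrite /c in h *; lra.
exists C; split => //; split.
  rewrite (work_fin x j (r j) C hx); congr (_%:E); apply/eqP; rewrite eq_le.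
  by rewrite -/(wk _ _ _ _) -/(F C) FC1 FC2.
move=> C' C'C; rewrite (work_fin x j (r j) C' hx) => -[hC'].
have : E C' by rewrite /E /= /F /wk hC'.
move=> /ge_C; lra.
Qed.


Lemma work_after x j C T : is_schedule r p x -> is_completion r p x j C ->
  C <= T -> wk x j (r j) T = p j.
Proof.
move=> hx hC CT; rewrite /wk /work.
rewrite (@int_eqD (x j) `[r j, T] `[r j, C]).
- by have := hC.1; rewrite /work => ->.
- move=> t /=; rewrite !in_itv /= => /andP[-> tT] /negP; rewrite andTb -ltNge => Ct.
  by apply: zero_after hx hC _; apply: ltW.
- move=> t /=; rewrite !in_itv /= => /andP[rt tC] H; exfalso; apply: H.
  by rewrite rt /=; exact: le_trans CT.
Qed.

Lemma work_lt x j T : is_schedule r p x -> 0 < p j ->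
  (forall C, is_completion r p x j C -> T < C) -> wk x j (r j) T < p j.
Proof.
move=> hx hp H; rewrite ltNge; apply/negP => h.
have [C [hC CT]] := exists_completion x j T hx hp h.
have := H C hC; lra.
Qed.

Lemma wk_le_p x j T : is_schedule r p x -> 0 < p j -> wk x j (r j) T <= p j.
Proof.
move=> hx hp.
case: (pselect (exists C, is_completion r p x j C /\ C <= T)) => [[C [hC CT]]|Hn].
  by rewrite (work_after x j C T hx hC CT).
apply/ltW/work_lt => // C hC; rewrite ltNge; apply/negP => CT; apply: Hn.
by exists C.
Qed.

Lemma first_exists x (s : {perm 'I_n}) j t :
  pending r p x j t -> exists f, first_pending r p x s f t /\
    ((s^-1)%g f <= (s^-1)%g j)%N.
Proof.
suff H : forall m j, ((s^-1)%g j <= m)%N -> pending r p x j t ->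
  exists f, first_pending r p x s f t /\ ((s^-1)%g f <= (s^-1)%g j)%N.
  by move=> hj; apply: (H _ j (leqnn _) hj).
elim=> [|m IH] j' hm hj.
  exists j'; split => //; split => // k _.
  by move: hm; rewrite leqn0 => /eqP ->.
case: (pselect (exists k, pending r p x k t /\ ((s^-1)%g k < (s^-1)%g j')%N)).
  move=> [k [hk lt]].
  have hkm : ((s^-1)%g k <= m)%N by rewrite -ltnS (leq_trans lt hm).
  have [f [hf fk]] := IH k hkm hk.
  by exists f; split => //; apply: leq_trans fk (ltnW lt).
move=> Hn; exists j'; split => //; split => // k hk.
rewrite leqNgt; apply/negP => lt; apply: Hn; by exists k.
Qed.


Lemma sum_mE x (Q : pred 'I_n) (D : set R) : is_schedule r p x ->
  measurable_fun D (fun t => (\sum_(j | Q j) x j t)%:E).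
Proof.
move=> hx; apply/measurable_EFinP.
under eq_fun do rewrite big_mkcond.
apply: measurable_sum => j; case: (Q j) => //=.
by apply/measurable_EFinP; exact: sched_mE.
Qed.

Lemma int_sum x (Q : pred 'I_n) a b : is_schedule r p x ->
  (\sum_(j | Q j) wk x j a b)%:E =
  (\int[mu]_(t in `[a, b]) (\sum_(j | Q j) x j t)%:E)%E.
Proof.
move=> hx; rewrite -sumEFin.
under eq_bigr do rewrite /wk -work_fin //.
under eq_integral do rewrite -sumEFin -big_filter.
rewrite ge0_integral_sum //.
- by rewrite big_filter.
- by move=> j; exact: sched_mE.
- by move=> j t _; rewrite lee_fin; exact: sched_ge0.
Qed.


Lemma main_aux (hr : forall i, 0 <= r i) (hp : forall i, 0 < p i)
  (s : {perm 'I_n}) (w : 'I_n -> R -> R) (Cw : 'I_n -> R)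
  (hw : is_schedule r p w) (hseq : has_completion_sequence r p w s Cw)
  (Pri : 'I_n -> R -> R) (hPs : is_schedule r p Pri) (hPri : is_Pri r p s Pri) :
  forall i : 'I_n, exists C : R, is_completion r p Pri i C /\ C <= Cw i.
Proof.
move=> i; set T := Cw i.
have [hCw hmono] := hseq.
have rCw : forall j, r j <= Cw j.
  move=> j; rewrite leNgt; apply/negP => h.
  have := (hCw j).1; rewrite /work set_itv_ge ?integral_set0; last first.
    by rewrite bnd_simp -ltNge.
  case=> h0; have := hp j; lra.
pose A := fun j => ((s^-1)%g j <= (s^-1)%g i)%N.
have ACw : forall j, A j -> Cw j <= T.
  move=> j; rewrite /A leq_eqVlt => /orP[/eqP e|lt].
    by have -> : j = i by apply: (@perm_inj _ (s^-1)%g); apply: val_inj.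
  by have := hmono _ _ lt; rewrite !permKV.
case: (pselect (exists C, is_completion r p Pri i C /\ C <= T)) => // Hno.
exfalso.
have H0 : forall C, is_completion r p Pri i C -> T < C.
  move=> C hC; rewrite ltNge; apply/negP => CT; apply: Hno; by exists C.
have pend_i : forall t, r i <= t -> t <= T -> pending r p Pri i t.
  move=> t h1 h2; split => // C hC; have := H0 C hC; lra.
pose Z := [set t | t <= T /\ forall j, A j -> ~ pending r p Pri j t].
have T0 : 0 <= T by apply: le_trans (rCw i); exact: hr.
have Zm1 : Z (-1).
  split; first lra.
  move=> j _ [hj _]; have := hr j; lra.
have Zlt : forall z, Z z -> z < r i.
  move=> z [zT hz]; rewrite ltNge; apply/negP => h.
  by apply: (hz i (leqnn _)); apply: pend_i.
have hsup : has_sup Z by split; [exists (-1) | exists T => z []].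
pose t0 := sup Z.
have t0T : t0 <= T by apply: ge_sup; [exists (-1) | move=> z []].
have Zle : forall z, Z z -> z <= t0 by move=> z; apply: sup_upper_bound.
pose d := p i - wk Pri i (r i) T.
have d0 : 0 < d by rewrite /d subr_gt0; apply: work_lt.
have [t1 Zt1 t1gt] := sup_adherent d0 hsup.
have t1t0 : t1 <= t0 by apply: Zle.
have t1ri : t1 < r i by apply: Zlt.
pose B := fun j => A j && (t1 < r j).
have I1 : T - t0 <= \sum_(j | A j) wk Pri j t1 T.
  rewrite -lee_fin int_sum // -mu_oc //.
  rewrite -[X in (X <= _)%E]mul1e -integral_cst //.
  apply: (@le_trans _ _ (\int[mu]_(t in `]t0, T]) (\sum_(j | A j) Pri j t)%:E)%E).
    apply: ge0_le_integral => //; first exact: sum_mE.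
    move=> t /=; rewrite in_itv /= => /andP[t0t tT]; rewrite lee_fin.
    have [j [Aj pj]] : exists j, A j /\ pending r p Pri j t.
      apply: contrapT => Hn.
      have : Z t.
        split => // j Aj pj; apply: Hn; by exists j.
      move=> /Zle; lra.
    have [f [hf fj]] := first_exists Pri s j t pj.
    have Af : A f by apply: leq_trans fj Aj.
    rewrite (bigD1 f) //= ((hPri f t).1 hf) lerDl.
    by apply: sumr_ge0 => k _; exact: sched_ge0.
  apply: ge0_subset_integral => //.
  - exact: sum_mE.
  - by move=> t _; rewrite lee_fin; apply: sumr_ge0 => k _; exact: sched_ge0.
  move=> t; rewrite /= !in_itv /= => /andP[t0t ->]; rewrite andbT.
  by apply: le_trans t1t0 (ltW t0t).
have I2 : \sum_(j | A j) wk Pri j t1 T = \sum_(j | B j) wk Pri j (r j) T.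
  rewrite (bigID (fun j => t1 < r j)) /=.
  rewrite [X in _ + X]big1 ?addr0.
    apply: eq_bigr => j /andP[Aj rj].
    rewrite /wk /work (@int_eqD (Pri j) `[t1, T] `[r j, T]) //.
    - move=> t /=; rewrite !in_itv /= => /andP[t1t tT] H.
      apply: zero_before => //; rewrite ltNge; apply/negP => rt; apply: H.
      by rewrite rt tT.
    - move=> t /=; rewrite !in_itv /= => /andP[rt tT] H; exfalso; apply: H.
      by rewrite tT andbT; apply: le_trans (ltW rj) rt.
  move=> j /andP[Aj]; rewrite -leNgt => rj.
  have [C [hC Ct1]] : exists C, is_completion r p Pri j C /\ C <= t1.
    apply: contrapT => Hn; apply: (Zt1.2 j Aj); split => // C hC.
    rewrite ltNge; apply/negP => Ct; apply: Hn; by exists C.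
  rewrite /wk /work (@int_eqD (Pri j) `[t1, T] set0) ?integral_set0 //.
  move=> t /=; rewrite in_itv /= => /andP[t1t _] _.
  by apply: (zero_after Pri j C t hPs hC); apply: le_trans Ct1 t1t.
have Bi : B i by rewrite /B /A leqnn.
have I3 : \sum_(j | B j) wk Pri j (r j) T <= \sum_(j | B j) p j - d.
  rewrite (bigD1 i) //= [X in _ <= X - _](bigD1 i) //=.
  have : \sum_(j | B j && (j != i)) wk Pri j (r j) T <=
         \sum_(j | B j && (j != i)) p j.
    by apply: ler_sum => j _; apply: wk_le_p.
  rewrite /d; lra.
have I4 : \sum_(j | B j) p j <= T - t1.
  have -> : \sum_(j | B j) p j = \sum_(j | B j) wk w j t1 T.
    apply: eq_bigr => j /andP[Aj rj].
    rewrite /wk /work (@int_eqD (w j) `[t1, T] `[r j, Cw j]).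
    - by have := (hCw j).1; rewrite /work => ->.
    - move=> t /=; rewrite !in_itv /= => /andP[t1t tT] H.
      case: (ltP t (r j)) => [tr|rt]; first exact: zero_before.
      apply: (zero_after w j (Cw j) t hw (hCw j)); rewrite leNgt; apply/negP => tC.
      by apply: H; rewrite rt (ltW tC).
    - move=> t /=; rewrite !in_itv /= => /andP[rt tC] H; exfalso; apply: H.
      rewrite (le_trans (ltW rj) rt) /=; apply: le_trans tC _; exact: ACw.
  rewrite -lee_fin int_sum // -mu_cc; last by apply: le_trans t0T.
  apply: int_le_mu => //; first exact: sum_mE.
  move=> t; apply/andP; split; first by apply: sumr_ge0 => k _; exact: sched_ge0.
  apply: le_trans (hw.2.2.1 t).
  rewrite [X in _ <= X](bigID B) /= lerDl.
  by apply: sumr_ge0 => k _; exact: sched_ge0.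
rewrite I2 in I1; move: t1gt; rewrite -/t0 => t1gt; lra.
Qed.

End Aux.


Local Close Scope classical_set_scope.

Theorem mainTheorem1 (R : realType) (n : nat) (r p : 'I_n -> R)
  (hr : forall i, 0 <= r i) (hp : forall i, 0 < p i)
  (s : {perm 'I_n}) (w : 'I_n -> R -> R) (Cw : 'I_n -> R)
  (hw : is_schedule r p w) (hseq : has_completion_sequence r p w s Cw)
  (Pri : 'I_n -> R -> R) (hPs : is_schedule r p Pri) (hPri : is_Pri r p s Pri) :
  forall i : 'I_n, exists C : R, is_completion r p Pri i C /\ C <= Cw i.
Proof. exact: (@main_aux R n r p hr hp s w Cw hw hseq Pri hPs hPri). Qed.
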